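(* Let $G=\mathrm{GL}_n$ or $\mathrm{GSp}_{2n}$ and let $M\supset A$ be the Levi subgroup of a standard parabolic subgroup. Let $\nu\in X_{M,\mathbf Q}\cap X_*(A)_{\mathbf Q,\mathrm{dom}}$ be such that its image under $\kappa_M\otimes\mathbf Q$ lies in $\pi_1(M)$. Let $\tilde\nu\in X_*(A)$ be the unique $M$-dominant $M$-minuscule element with $\kappa_M(\tilde\nu)=\kappa_M(\nu)$, and let $[\tilde\nu]$ be the unique $G$-dominant element of $W\tilde\nu$. Then for every $\mu\in X_*(A)_{\mathrm{dom}}$ with $\nu\le\mu$ we have $\nu\le[\tilde\nu]\le\mu$.
   Context: $G=\mathrm{GL}_n$ or $\mathrm{GSp}_{2n}$ over a $p$-adic field, with diagonal maximal split torus $A$, standard Borel $B\supset A$, Weyl group $W$; $X_*(A)$ the cocharacter group ($\mathbf Z^n$, resp. $\{\mu\in\mathbf Z^{2n}:\mu_i+\mu_{2n+1-i}$ constant$\}$). Dominant means $B$-dominant (non-increasing entries); $X_*(A)_{\mathrm{dom}}$, $X_*(A)_{\mathbf Q,\mathrm{dom}}$ denote dominant elements of $X_*(A)$, $X_*(A)\otimes\mathbf Q$. $\nu\le\mu$ means $\mu-\nu$ is a non-negative linear combination of positive coroots. Standard Levi subgroups: block diagonal $M_{(m_1,\dots,m_r)}$ for $\mathrm{GL}_n$, intersection of $\mathrm{GSp}_{2n}$ with $M_{(m_1,\dots,m_r,2j,m_r,\dots,m_1)}$ for $\mathrm{GSp}_{2n}$. $A_M$ is the maximal split torus in the center of $M$,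 $X_M=X_*(A_M)\subset X_*(A)$, $X_{M,\mathbf Q}=X_M\otimes\mathbf Q$. $\pi_1(M)=X_*(A)/(\text{coroot lattice of }M)$ (a free abelian group), $\kappa_M:X_*(A)\to\pi_1(M)$ the projection. An element is $M$-dominant if dominant for $B\cap M$, and $M$-minuscule if $\langle\tilde\nu,\alpha\rangle\in\{0,\pm1\}$ for all roots $\alpha$ of $M$; the $M$-dominant $M$-minuscule elements map bijectively onto $\pi_1(M)$. *)

(* Defs.v *)
From mathcomp Require Import all_boot all_order all_algebra all_fingroup.
Set Implicit Arguments. Unset Strict Implicit. Unset Printing Implicit Defensive.
Import Order.TTheory GRing.Theory Num.Theory.
Local Open Scope ring_scope.

Inductive grp := GL of nat | GSp of nat.

Definition rankG (G : grp) : nat := match G with GL n => n | GSp n => n end.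
Definition dimG (G : grp) : nat := match G with GL n => n | GSp n => (n + n)%N end.
Definition is_sp (G : grp) : bool := if G is GSp _ then true else false.

(* vectors in X_*(A) (x) Q, sitting in Q^{dimG G} (diagonal coordinates) *)
Notation vec G := 'rV[rat]_(dimG G).
Definition co (G : grp) (v : vec G) (a : 'I_(dimG G)) : rat := v 0 a.

Definition ev (G : grp) (a : 'I_(dimG G)) : vec G := delta_mx 0 a.

(* The coroot of the root of G whose root space is the matrix entry (a,b),
   a <> b.  For GSp_{2n} (antidiagonal form), a' := rev_ord a = 2n-1-a, and the
   root at (a,b) is the character t |-> t_a / t_b; its coroot is e_a - e_{a'}
   when b = a' (long root), and e_a - e_b + e_{b'} - e_{a'} otherwise. *)
Definition coroot (G : grp) (a b : 'I_(dimG G)) : vec G :=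
  if is_sp G && (b != rev_ord a)
  then ev a - ev b + ev (rev_ord b) - ev (rev_ord a)
  else ev a - ev b.

Definition in_XQ (G : grp) (v : vec G) : Prop :=
  if is_sp G then exists c : rat, forall a : 'I_(dimG G), co v a + co v (rev_ord a) = c
  else True.

Definition in_X (G : grp) (v : vec G) : Prop :=
  in_XQ v /\ forall a : 'I_(dimG G), co v a \is a Num.int.

Definition dominant (G : grp) (v : vec G) : Prop :=
  forall a b : 'I_(dimG G), (a <= b)%N -> co v b <= co v a.

Definition le_co (G : grp) (nu mu : vec G) : Prop :=
  exists c : 'I_(dimG G) -> 'I_(dimG G) -> rat,
    (forall a b, 0 <= c a b) /\
    mu - nu = \sum_(a : 'I_(dimG G)) \sum_(b : 'I_(dimG G) | (a < b)%N) c a b *: coroot a b.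

(* Standard Levi subgroups, given by the block sizes (m_1,...,m_r) and, for
   GSp_{2n}, the middle block 2j:  GL_n: M_(m_1..m_r);
   GSp_{2n}: GSp_{2n} cap M_(m_1..m_r,2j,m_r..m_1) (middle block omitted if j=0). *)
Definition std_levi (G : grp) (s : seq nat) (j : nat) : Prop :=
  all (fun m => (0 < m)%N) s /\
  (if is_sp G then (sumn s + j)%N = rankG G else sumn s = rankG G /\ j = 0%N).

Definition block_list (G : grp) (s : seq nat) (j : nat) : seq nat :=
  if is_sp G then s ++ (if j == 0%N then [::] else [:: j.*2]) ++ rev s else s.

(* index of the diagonal block containing position a *)
Definition blk (G : grp) (s : seq nat) (j : nat) (a : 'I_(dimG G)) : nat :=
  let L := block_list G s j in
  count (fun t => (t <= a)%N) [seq sumn (take k L) | k <- iota 1 (size L)].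

Definition same_blk (G : grp) (s : seq nat) (j : nat) (a b : 'I_(dimG G)) : bool :=
  blk s j a == blk s j b.

(* X_{M,Q} = X_*(A_M) (x) Q: elements of X_*(A)_Q constant on each block *)
Definition in_XMQ (G : grp) (s : seq nat) (j : nat) (v : vec G) : Prop :=
  in_XQ v /\ forall a b, same_blk s j a b -> co v a = co v b.

(* the roots of M are those with root space at (a,b), a <> b, in a diagonal
   block of M.  Coroot lattice of M (Z-span) and its Q-span. *)
Definition in_corootZ_M (G : grp) (s : seq nat) (j : nat) (v : vec G) : Prop :=
  exists c : 'I_(dimG G) -> 'I_(dimG G) -> int,
    v = \sum_(a : 'I_(dimG G)) \sum_(b : 'I_(dimG G) | same_blk s j a b && (a != b))
          coroot a b *~ c a b.

Definition in_corootQ_M (G : grp) (s : seq nat) (j : nat) (v : vec G) : Prop :=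
  exists c : 'I_(dimG G) -> 'I_(dimG G) -> rat,
    v = \sum_(a : 'I_(dimG G)) \sum_(b : 'I_(dimG G) | same_blk s j a b && (a != b))
          c a b *: coroot a b.

Definition M_dominant (G : grp) (s : seq nat) (j : nat) (v : vec G) : Prop :=
  forall a b : 'I_(dimG G), (a < b)%N -> same_blk s j a b -> co v b <= co v a.

(* M-minuscule: <v, alpha> in {0, 1, -1} for all roots alpha of M;
   <v, alpha_(a,b)> = v_a - v_b *)
Definition M_minuscule (G : grp) (s : seq nat) (j : nat) (v : vec G) : Prop :=
  forall a b : 'I_(dimG G), same_blk s j a b -> a != b ->
    (co v a - co v b == 0) || (co v a - co v b == 1) || (co v a - co v b == -1).

Definition weyl (G : grp) (w : 'S_(dimG G)) : Prop :=
  if is_sp G then forall a : 'I_(dimG G), w (rev_ord a) = rev_ord (w a) else True.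

Definition wact (G : grp) (w : 'S_(dimG G)) (v : vec G) : vec G :=
  \row_(a < dimG G) co v ((w^-1)%g a).

(* Main.v *)
Require Import Defs.
From mathcomp Require Import all_boot all_order all_algebra all_fingroup.
From mathcomp Require Import zify lra.
Set Implicit Arguments. Unset Strict Implicit. Unset Printing Implicit Defensive.
Import Order.TTheory GRing.Theory Num.Theory.
Local Open Scope ring_scope.

Definition PS (N k : nat) (f : 'I_N -> rat) : rat := \sum_(x : 'I_N | (x < k)%N) f x.
Definition pp (y : rat) : rat := if 0 <= y then y else 0.
Definition Phi (N : nat) (t : rat) (f : 'I_N -> rat) : rat := \sum_(x : 'I_N) pp (f x - t).
Definition domf (N : nat) (f : 'I_N -> rat) := forall a b : 'I_N, (a <= b)%N -> f b <= f a.

Lemma pp_ge0 y : 0 <= pp y.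
Proof. by rewrite /pp; case: ifP. Qed.
Lemma pp_ge y : y <= pp y.
Proof. by rewrite /pp; case: ifP => // /negbT; rewrite -ltNge => /ltW. Qed.
Lemma pp_id y : 0 <= y -> pp y = y.
Proof. by rewrite /pp => ->. Qed.
Lemma pp_0 y : y <= 0 -> pp y = 0.
Proof. by rewrite /pp; case: ifP => // H1 H2; apply/eqP; rewrite eq_le H1 H2. Qed.

Lemma sum_sub_le (N : nat) (P : pred 'I_N) (g : 'I_N -> rat) :
  (forall x, 0 <= g x) -> \sum_(x | P x) g x <= \sum_x g x.
Proof.
move=> H; rewrite [X in _ <= X](bigID P) /= lerDl; apply: sumr_ge0 => x _; exact: H.
Qed.

Lemma stepA N k t (f : 'I_N -> rat) :
  PS k f <= \sum_(x : 'I_N | (x < k)%N) t + Phi t f.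
Proof.
rewrite /PS /Phi.
apply: (@le_trans _ _ (\sum_(x : 'I_N | (x < k)%N) (t + pp (f x - t)))).
  apply: ler_sum => x _; rewrite -lerBlDl; exact: pp_ge.
rewrite big_split /= lerD2l; apply: sum_sub_le => x; exact: pp_ge0.
Qed.

Lemma stepE N k (f : 'I_N -> rat) (Hk : (k.-1 < N)%N) : (0 < k)%N -> domf f ->
  PS k f = \sum_(x : 'I_N | (x < k)%N) f (Ordinal Hk) + Phi (f (Ordinal Hk)) f.
Proof.
move=> k0 df; rewrite /PS /Phi.
have -> : \sum_(x : 'I_N) pp (f x - f (Ordinal Hk)) = \sum_(x : 'I_N | (x < k)%N) (f x - f (Ordinal Hk)).
  rewrite [RHS]big_mkcond /=; apply: eq_bigr => x _; case: ifP => xk.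
    apply: pp_id; rewrite subr_ge0; apply: df => /=; by rewrite -ltnS prednK.
  apply: pp_0; rewrite subr_le0; apply: df => /=.
  move: xk k0; clear; lia.
rewrite -big_split /=; apply: eq_bigr => x _; by rewrite addrC subrK.
Qed.

Lemma Phi_perm N t (f : 'I_N -> rat) (s : 'S_N) : Phi t (fun x => f (s x)) = Phi t f.
Proof. rewrite /Phi; by rewrite [RHS](reindex_inj (@perm_inj _ s)). Qed.

Lemma sum_perm N (f : 'I_N -> rat) (s : 'S_N) : \sum_x f (s x) = \sum_x f x.
Proof. by rewrite [RHS](reindex_inj (@perm_inj _ s)). Qed.

Lemma stepD N t (nu mu : 'I_N -> rat) : domf nu ->
  (forall k, PS k nu <= PS k mu) -> Phi t nu <= Phi t mu.
Proof.
move=> dn le; set k' := \big[maxn/0%N]_(x : 'I_N | t < nu x) (nat_of_ord x).+1.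
have key : forall x : 'I_N, (t < nu x) = (x < k')%N.
  move=> x; apply/idP/idP => [H|]; first by rewrite /k'; apply: (leq_bigmax_cond (F := fun y : 'I_N => (nat_of_ord y).+1)) H.
  apply: contraLR; rewrite -leNgt -leqNgt => H.
  apply/bigmax_leqP => y ty; rewrite ltnNge; apply/negP => xy.
  by move: (le_lt_trans (dn _ _ xy) (le_lt_trans H ty)); rewrite ltxx.
apply: (@le_trans _ _ (\sum_(x : 'I_N | (x < k')%N) (mu x - t))); last first.
  apply: (le_trans _ (sum_sub_le (fun x : 'I_N => (x < k')%N) (fun x => pp_ge0 _))).
  apply: ler_sum => x _; exact: pp_ge.
have -> : Phi t nu = \sum_(x : 'I_N | (x < k')%N) (nu x - t).
  rewrite /Phi (eq_bigr (fun x : 'I_N => if (x < k')%N then nu x - t else 0)); first by rewrite -big_mkcond.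
  move=> x _; rewrite -key; case: ifP => H; first by apply: pp_id; rewrite subr_ge0 ltW.
  by apply: pp_0; rewrite subr_le0 leNgt H.
rewrite !sumrB lerD2r; exact: le.
Qed.

Lemma partK N K (bl : 'I_N -> nat) (blK : forall x, (bl x < K)%N) (P : pred 'I_N) (F : 'I_N -> rat) :
  \sum_(x | P x) F x = \sum_(i < K) \sum_(x | P x && (bl x == i)) F x.
Proof.
rewrite (partition_big (fun x => Ordinal (blK x)) predT) //=.
Qed.

Lemma int_lt_le1 (x y : rat) : x \is a Num.int -> y \is a Num.int -> x < y -> x + 1 <= y.
Proof.
move=> /intrP [a ->] /intrP [b ->]; rewrite ltr_int => ab.
by rewrite -[1]/(1%:~R) -intrD ler_int lezD1.
Qed.

Lemma stepC_blk N (B : pred 'I_N) (nu nut : 'I_N -> rat) t :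
  t \is a Num.int -> (forall x, nut x \is a Num.int) ->
  (forall a b, B a -> B b -> nu a = nu b) ->
  (forall a b, B a -> B b -> nut a - nut b <= 1) ->
  \sum_(x | B x) nut x = \sum_(x | B x) nu x ->
  \sum_(x | B x) pp (nut x - t) = \sum_(x | B x) pp (nu x - t).
Proof.
move=> ti nuti nuc nutm S.
have SB : \sum_(x | B x) (nut x - t) = \sum_(x | B x) (nu x - t) by rewrite !sumrB S.
case: (boolP [exists x, B x && (nut x < t)]).
  move=> /existsP [y /andP [By yt]].
  have y1 := int_lt_le1 (nuti y) ti yt.
  rewrite big1; last first.
    move=> x Bx; apply: pp_0; rewrite subr_le0; apply: (le_trans _ y1).
    by rewrite -lerBlDl; apply: nutm.
  have neg : \sum_(x | B x) (nut x - t) < 0.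
    rewrite (bigD1 y) //=; apply: (@le_lt_trans _ _ ((nut y - t) + 0)); last first.
      by rewrite addr0 subr_lt0.
    rewrite lerD2l; apply: sumr_le0 => x /andP [Bx _]; rewrite subr_le0.
    apply: (le_trans _ y1); by rewrite -lerBlDl; apply: nutm.
  have vt : nu y < t.
    rewrite ltNge; apply/negP => tv; move: neg; rewrite SB ltNge; move/negP; apply.
    apply: sumr_ge0 => x Bx; by rewrite subr_ge0 (nuc x y).
  symmetry; apply: big1 => x Bx; apply: pp_0; by rewrite subr_le0 (nuc x y) // ltW.
rewrite negb_exists => /forallP H.
have tn : forall x, B x -> t <= nut x.
  by move=> x Bx; move: (H x); rewrite Bx /= -leNgt.
rewrite (eq_bigr (fun x => nut x - t)); last by move=> x Bx; apply: pp_id; rewrite subr_ge0 tn.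
rewrite SB.
case: (boolP [exists x, B x]); last first.
  rewrite negb_exists => /forallP H2; rewrite !big_pred0 // => x; exact: negbTE (H2 x).
move=> /existsP [y By].
case: (lerP t (nu y)) => vt.
  apply: eq_bigr => x Bx; symmetry; apply: pp_id; by rewrite subr_ge0 (nuc x y).
rewrite [RHS]big1; last by move=> x Bx; apply: pp_0; rewrite subr_le0 (nuc x y) // ltW.
apply/eqP; rewrite eq_le; apply/andP; split.
  apply: sumr_le0 => x Bx; by rewrite subr_le0 (nuc x y) // ltW.
rewrite -SB; apply: sumr_ge0 => x Bx; by rewrite subr_ge0 tn.
Qed.

Lemma claim1_blk N (B : pred 'I_N) k (nu nut : 'I_N -> rat) :
  (forall a b, B a -> B b -> nu a = nu b) ->
  (forall a b, B a -> B b -> (a < b)%N -> nut b <= nut a) ->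
  \sum_(x | B x) nut x = \sum_(x | B x) nu x ->
  \sum_(x | B x && (x < k)%N) nu x <= \sum_(x | B x && (x < k)%N) nut x.
Proof.
move=> nuc md S.
rewrite -subr_ge0 -sumrB.
set g := fun x => nut x - nu x.
have S0 : \sum_(x | B x) g x = 0 by rewrite sumrB S subrr.
rewrite leNgt; apply/negP => neg.
have [a /andP [Ba ak] ga] : exists2 a, B a && (a < k)%N & g a < 0.
  case: (boolP [exists x, (B x && (x < k)%N) && (g x < 0)]).
    by move=> /existsP [x /andP [H1 H2]]; exists x.
  rewrite negb_exists => /forallP H; move: neg; rewrite ltNge; move/negP; case.
  apply: sumr_ge0 => x Px; by move: (H x); rewrite Px /= -leNgt.
have pos : 0 < \sum_(x | B x && ~~ (x < k)%N) g x.
  move: S0 neg; rewrite (bigID (fun x : 'I_N => (x < k)%N)) /= => /eqP; rewrite addr_eq0 => /eqP ->.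
  by rewrite oppr_lt0.
have [b /andP [Bb bk] gb] : exists2 b, B b && ~~ (b < k)%N & 0 < g b.
  case: (boolP [exists x, (B x && ~~ (x < k)%N) && (0 < g x)]).
    by move=> /existsP [x /andP [H1 H2]]; exists x.
  rewrite negb_exists => /forallP H; move: pos; rewrite ltNge; move/negP; case.
  apply: sumr_le0 => x Px; by move: (H x); rewrite Px /= -leNgt.
have ab : (a < b)%N by rewrite -leqNgt in bk; exact: leq_trans ak bk.
have : g b <= g a by rewrite /g (nuc a b Ba Bb) lerD2r md.
by rewrite leNgt (lt_trans ga gb).
Qed.

Lemma PS_big N k (f : 'I_N -> rat) : (N <= k)%N -> PS k f = \sum_x f x.
Proof. move=> Nk; apply: eq_bigl => x; by rewrite (leq_trans (ltn_ord x) Nk). Qed.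

Lemma PS_0 N (f : 'I_N -> rat) : PS 0 f = 0.
Proof. by rewrite /PS big_pred0. Qed.

Lemma core_total N K (bl : 'I_N -> nat) (blK : forall x, (bl x < K)%N) (nu nut : 'I_N -> rat) (s : 'S_N) :
  (forall i, \sum_(x | bl x == i) nut x = \sum_(x | bl x == i) nu x) ->
  \sum_x nut (s x) = \sum_x nu x.
Proof.
move=> bs; rewrite (sum_perm nut s) (partK blK predT nut) (partK blK predT nu).
apply: eq_bigr => i _; exact: bs.
Qed.

Lemma core N K (bl : 'I_N -> nat) (blK : forall x, (bl x < K)%N) (nu nut mu : 'I_N -> rat) (s : 'S_N) :
  domf nu -> domf (fun x => nut (s x)) -> domf mu ->
  (forall a b, bl a = bl b -> nu a = nu b) ->
  (forall a b, bl a = bl b -> (a < b)%N -> nut b <= nut a) ->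
  (forall a b, bl a = bl b -> nut a - nut b <= 1) ->
  (forall x, nut x \is a Num.int) -> (forall x, mu x \is a Num.int) ->
  (forall i, \sum_(x | bl x == i) nut x = \sum_(x | bl x == i) nu x) ->
  (forall k, PS k nu <= PS k mu) ->
  \sum_x mu x = \sum_x nu x ->
  forall k, PS k nu <= PS k (fun x => nut (s x)) /\ PS k (fun x => nut (s x)) <= PS k mu.
Proof.
move=> dnu dnutd dmu nuc md mm nuti mui bs le tot k.
have tot2 := core_total blK s bs.
case: (posnP k) => [->|k0]; first by rewrite !PS_0.
case: (leqP N k) => Nk.
  by rewrite !PS_big // tot tot2.
have Hk : (k.-1 < N)%N by move: k0 Nk; clear; lia.
have PhiC : forall t, t \is a Num.int -> Phi t nut = Phi t nu.
  move=> t ti; rewrite /Phi (partK blK predT) [RHS](partK blK predT).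
  apply: eq_bigr => i _; apply: stepC_blk => //.
  - by move=> a b /eqP ha /eqP hb; apply: nuc; rewrite ha hb.
  - by move=> a b /eqP ha /eqP hb; apply: mm; rewrite ha hb.
  - exact: bs.
split.
  apply: (@le_trans _ _ (PS k nut)).
    rewrite /PS (partK blK (fun x : 'I_N => (x < k)%N) nu) (partK blK (fun x : 'I_N => (x < k)%N) nut).
    apply: ler_sum => i _.
    rewrite (eq_bigl (fun x => (bl x == i) && (x < k)%N)); last by move=> x; rewrite andbC.
    rewrite [X in _ <= X](eq_bigl (fun x => (bl x == i) && (x < k)%N)); last by move=> x; rewrite andbC.
    apply: claim1_blk.
    - by move=> a b /eqP ha /eqP hb; apply: nuc; rewrite ha hb.
    - by move=> a b /eqP ha /eqP hb ab; apply: md => //; rewrite ha hb.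
    - exact: bs.
  apply: (le_trans (stepA k (nut (s (Ordinal Hk))) nut)).
  by rewrite -(Phi_perm _ _ s) -stepE.
apply: (le_trans (stepA k (mu (Ordinal Hk)) _)).
rewrite (stepE Hk k0 dmu) lerD2l Phi_perm PhiC //; exact: stepD.
Qed.

Definition bk (L : seq nat) (a : nat) : nat :=
  count (fun t => (t <= a)%N) [seq sumn (take k L) | k <- iota 1 (size L)].

Lemma sumn_take_mono (L : seq nat) k k' : (k <= k')%N -> (sumn (take k L) <= sumn (take k' L))%N.
Proof.
move=> kk; have -> : take k L = take k (take k' L) by rewrite take_takel.
rewrite -{2}(cat_take_drop k (take k' L)) sumn_cat; exact: leq_addr.
Qed.

Lemma bk_spec (L : seq nat) a i : (i < size L)%N ->
  (sumn (take i L) <= a)%N -> (a < sumn (take i.+1 L))%N -> bk L a = i.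
Proof.
move=> iL lo hi; rewrite /bk count_map.
have -> : size L = (i + (size L - i))%N by lia.
rewrite iotaD count_cat.
rewrite (@eq_in_count _ _ predT (iota 1 i)); last first.
  move=> k; rewrite mem_iota => /andP [k1 ki] /=.
  apply: leq_trans lo; apply: sumn_take_mono; lia.
rewrite (@eq_in_count _ _ pred0 (iota (1 + i) _)); last first.
  move=> k; rewrite mem_iota => /andP [k1 ki] /=.
  apply/negbTE; rewrite -ltnNge; apply: leq_trans hi _; apply: sumn_take_mono; lia.
by rewrite count_predT count_pred0 size_iota addn0.
Qed.

Lemma dIVT (f : nat -> nat) m a : (f 0 <= a)%N -> (a < f m)%N ->
  exists i, [/\ (i < m)%N, (f i <= a)%N & (a < f i.+1)%N].
Proof.
move=> f0; elim: m => [|m IH] h; first by move: (leq_trans h f0); rewrite ltnn.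
case: (ltnP a (f m)) => am.
  by case: (IH am) => i [H1 H2 H3]; exists i; split => //; apply: ltnW.
by exists m.
Qed.

Lemma bk_ex (L : seq nat) a : (a < sumn L)%N ->
  exists i, [/\ (i < size L)%N, (sumn (take i L) <= a)%N & (a < sumn (take i.+1 L))%N].
Proof.
move=> aL; have := @dIVT (fun k => sumn (take k L)) (size L) a; apply => //.
  by rewrite take0.
by rewrite take_size.
Qed.

Lemma sumn_take_rev (L : seq nat) k : rev L = L -> (k <= size L)%N ->
  sumn (take (size L - k) L) = (sumn L - sumn (take k L))%N.
Proof.
move=> rL kL.
have E : sumn L = (sumn (take (size L - k) L) + sumn (drop (size L - k) L))%N.
  by rewrite -sumn_cat cat_take_drop.
have D : drop (size L - k) L = rev (take k L).
  by rewrite -[X in drop _ X]rL drop_rev subKn.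
rewrite E D sumn_rev; lia.
Qed.

Lemma bk_rev (L : seq nat) a : rev L = L -> (a < sumn L)%N ->
  bk L (sumn L - a.+1) = (size L - (bk L a).+1)%N.
Proof.
move=> rL aL; case: (bk_ex aL) => i [iL lo hi].
rewrite (bk_spec iL lo hi).
apply: bk_spec; first lia.
  rewrite sumn_take_rev //; lia.
have e : (size L - i.+1).+1 = (size L - i)%N by lia.
rewrite e sumn_take_rev //; last by apply: ltnW.
lia.
Qed.


Lemma co_add G (u v : vec G) a : co (u + v) a = co u a + co v a.
Proof. by rewrite /co mxE. Qed.
Lemma co_opp G (v : vec G) a : co (- v) a = - co v a.
Proof. by rewrite /co mxE. Qed.
Lemma co_sub G (u v : vec G) a : co (u - v) a = co u a - co v a.
Proof. by rewrite co_add co_opp. Qed.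
Lemma co_scale G c (v : vec G) a : co (c *: v) a = c * co v a.
Proof. by rewrite /co mxE. Qed.
Lemma co_mulz G (v : vec G) z a : co (v *~ z) a = co v a *~ z.
Proof. by rewrite -scaler_int co_scale mulrzl. Qed.
Lemma co_sum G (I : finType) (P : pred I) (F : I -> vec G) a :
  co (\sum_(i | P i) F i) a = \sum_(i | P i) co (F i) a.
Proof. by rewrite /co summxE. Qed.
Lemma co_ev G (b a : 'I_(dimG G)) : co (ev b) a = (a == b)%:R.
Proof. by rewrite /co /ev mxE eqxx /= eq_sym. Qed.

Definition lf G (w : 'I_(dimG G) -> rat) (v : vec G) : rat := \sum_x w x * co v x.

Lemma lf_add G w (u v : vec G) : lf w (u + v) = lf w u + lf w v.
Proof. by rewrite /lf -big_split; apply: eq_bigr => x _; rewrite co_add mulrDr. Qed.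
Lemma lf_opp G w (v : vec G) : lf w (- v) = - lf w v.
Proof. by rewrite /lf -sumrN; apply: eq_bigr => x _; rewrite co_opp mulrN. Qed.
Lemma lf_sub G w (u v : vec G) : lf w (u - v) = lf w u - lf w v.
Proof. by rewrite lf_add lf_opp. Qed.
Lemma lf_scale G w c (v : vec G) : lf w (c *: v) = c * lf w v.
Proof. by rewrite /lf mulr_sumr; apply: eq_bigr => x _; rewrite co_scale mulrCA. Qed.
Lemma lf_mulz G w (v : vec G) z : lf w (v *~ z) = lf w v *~ z.
Proof.
by rewrite -scaler_int lf_scale mulrzl.
Qed.
Lemma lf_sum G w (I : finType) (P : pred I) (F : I -> vec G) :
  lf w (\sum_(i | P i) F i) = \sum_(i | P i) lf w (F i).
Proof.
rewrite /lf; under eq_bigr do rewrite co_sum mulr_sumr.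
by rewrite exchange_big.
Qed.
Lemma lf_ev G w (b : 'I_(dimG G)) : lf w (ev b) = w b.
Proof.
rewrite /lf (bigD1 b) //= co_ev eqxx mulr1 big1 ?addr0 // => x /negbTE xb.
by rewrite co_ev xb mulr0.
Qed.
Lemma lf_coroot G w (a b : 'I_(dimG G)) : lf w (coroot a b) =
  if is_sp G && (b != rev_ord a) then w a - w b + w (rev_ord b) - w (rev_ord a) else w a - w b.
Proof. rewrite /coroot; case: ifP => _; by rewrite !lf_add !lf_opp !lf_ev. Qed.

Lemma lf_le_co G w (nu mu : vec G) :
  (forall a b : 'I_(dimG G), (a < b)%N -> 0 <= lf w (coroot a b)) -> le_co nu mu -> 0 <= lf w (mu - nu).
Proof.
move=> H [c [c0 ->]]; rewrite lf_sum; apply: sumr_ge0 => a _; rewrite lf_sum.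
apply: sumr_ge0 => b ab; rewrite lf_scale; apply: mulr_ge0 => //; exact: H.
Qed.
Lemma lf_eq_co G w (nu mu : vec G) :
  (forall a b : 'I_(dimG G), (a < b)%N -> lf w (coroot a b) = 0) -> le_co nu mu -> lf w (mu - nu) = 0.
Proof.
move=> H [c [c0 ->]]; rewrite lf_sum; apply: big1 => a _; rewrite lf_sum.
apply: big1 => b ab; by rewrite lf_scale H // mulr0.
Qed.
Lemma lf_corootQ G s j w (v : vec G) :
  (forall a b, same_blk s j a b -> a != b -> lf w (coroot a b) = 0) -> in_corootQ_M s j v -> lf w v = 0.
Proof.
move=> H [c ->]; rewrite lf_sum; apply: big1 => a _; rewrite lf_sum.
apply: big1 => b /andP [sb ab]; by rewrite lf_scale H // mulr0.
Qed.
Lemma lf_corootZ G s j w (v : vec G) :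
  (forall a b, same_blk s j a b -> a != b -> lf w (coroot a b) = 0) -> in_corootZ_M s j v -> lf w v = 0.
Proof.
move=> H [c ->]; rewrite lf_sum; apply: big1 => a _; rewrite lf_sum.
apply: big1 => b /andP [sb ab]; by rewrite lf_mulz H // mul0rz.
Qed.

Lemma natb_le (b1 b2 : bool) : (b1 -> b2) -> (b1%:R : rat) <= b2%:R.
Proof. by case: b1; case: b2 => // H; have := H isT. Qed.

Definition psw G (k : nat) : 'I_(dimG G) -> rat := fun x => ((x < k)%N)%:R.
Arguments psw : clear implicits.
Lemma lf_psw G k (v : vec G) : lf (psw G k) v = PS k (co v).
Proof.
rewrite /lf /PS [RHS]big_mkcond /=; apply: eq_bigr => x _; rewrite /psw.
by case: ifP => _; rewrite ?mul1r ?mul0r.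
Qed.

Lemma val_rev G (a : 'I_(dimG G)) : val (rev_ord a) = (dimG G - a.+1)%N.
Proof. by []. Qed.

Lemma psw_coroot G k (a b : 'I_(dimG G)) : (a < b)%N -> 0 <= lf (psw G k) (coroot a b).
Proof.
move=> ab; rewrite lf_coroot /psw.
have h1 : (((b < k)%N)%:R : rat) <= ((a < k)%N)%:R.
  apply: natb_le => bk; exact: ltn_trans ab bk.
have h2 : ((((rev_ord a) < k)%N)%:R : rat) <= (((rev_ord b) < k)%N)%:R.
  apply: natb_le; rewrite !val_rev => H; have := ltn_ord a; have := ltn_ord b; lia.
case: ifP => _; lra.
Qed.

Lemma psw_coroot_tot G k (a b : 'I_(dimG G)) : (dimG G <= k)%N -> lf (psw G k) (coroot a b) = 0.
Proof.
move=> Nk; rewrite lf_coroot /psw !(leq_trans (ltn_ord _) Nk).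
by case: ifP => _; rewrite ?subrr ?addrK ?subrr.
Qed.

Definition antiw G (y : 'I_(dimG G)) : 'I_(dimG G) -> rat :=
  fun x => (x == y)%:R + (x == rev_ord y)%:R.

Lemma sum_delta G (y : 'I_(dimG G)) (f : 'I_(dimG G) -> rat) :
  \sum_x (x == y)%:R * f x = f y.
Proof.
rewrite (bigD1 y) //= eqxx mul1r big1 ?addr0 // => x /negbTE ->; by rewrite mul0r.
Qed.

Lemma lf_antiw G y (v : vec G) : lf (antiw y) v = co v y + co v (rev_ord y).
Proof.
rewrite /lf /antiw; under eq_bigr do rewrite mulrDl.
by rewrite big_split /= !sum_delta.
Qed.

Lemma rev_eq G (p q : 'I_(dimG G)) : (rev_ord p == q) = (p == rev_ord q).
Proof. by rewrite -(inj_eq rev_ord_inj) rev_ordK. Qed.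

Lemma antiw_coroot G y (a b : 'I_(dimG G)) : is_sp G -> lf (antiw y) (coroot a b) = 0.
Proof.
move=> sp; rewrite lf_coroot sp /= /antiw.
rewrite !rev_eq !rev_ordK.
case: ifP => [_|/negbFE/eqP ->]; last by rewrite !rev_eq rev_ordK; lra.
lra.
Qed.

Lemma blk_bk G s j (a : 'I_(dimG G)) : blk s j a = bk (block_list G s j) a.
Proof. by []. Qed.

Lemma blk_lt G s j (a : 'I_(dimG G)) : (blk s j a < (size (block_list G s j)).+1)%N.
Proof. by rewrite ltnS blk_bk /bk (leq_trans (count_size _ _)) // size_map size_iota. Qed.

Lemma block_list_rev G s j : is_sp G -> rev (block_list G s j) = block_list G s j.
Proof.
rewrite /block_list => ->; rewrite !rev_cat revK catA; congr (_ ++ _).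
by case: (j == 0%N).
Qed.

Lemma block_list_sum G s j : std_levi G s j -> sumn (block_list G s j) = dimG G.
Proof.
case: G => n [_] /=; rewrite /block_list /=; first by case.
rewrite !sumn_cat sumn_rev => H; case: eqP => [E|_] /=; rewrite -?H ?E; lia.
Qed.

Lemma blk_rev G s j (a : 'I_(dimG G)) : std_levi G s j -> is_sp G ->
  blk s j (rev_ord a) = (size (block_list G s j) - (blk s j a).+1)%N.
Proof.
move=> sl sp; rewrite !blk_bk val_rev.
have := @bk_rev (block_list G s j) a (block_list_rev s j sp).
rewrite (block_list_sum sl); apply; exact: ltn_ord.
Qed.

Definition blw G s j (i : nat) : 'I_(dimG G) -> rat := fun x => (blk s j x == i)%:R.
Arguments blw : clear implicits.

Lemma lf_blw G s j i (v : vec G) : lf (blw G s j i) v = \sum_(x | blk s j x == i) co v x.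
Proof.
rewrite /lf [RHS]big_mkcond /=; apply: eq_bigr => x _; rewrite /blw.
by case: ifP => _; rewrite ?mul1r ?mul0r.
Qed.

Lemma blw_coroot G s j i (a b : 'I_(dimG G)) : std_levi G s j -> same_blk s j a b ->
  lf (blw G s j i) (coroot a b) = 0.
Proof.
move=> sl /eqP sab; rewrite lf_coroot /blw sab.
case: ifP => [/andP [sp _]|_]; last by rewrite subrr.
by rewrite !blk_rev // sab; lra.
Qed.

Lemma sum_ord_nat N (m : nat) (g : nat -> rat) :
  \sum_(b : 'I_N) (if (nat_of_ord b == m) then g (nat_of_ord b) else 0) = if (m < N)%N then g m else 0.
Proof.
case: ltnP => mN.
  rewrite (bigD1 (Ordinal mN)) //= eqxx big1 ?addr0 // => b.
  by rewrite -val_eqE /= => /negbTE ->.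
apply: big1 => b _; case: eqP => // E; have := ltn_ord b; rewrite E; lia.
Qed.

Lemma PS_succ N (f : 'I_N -> rat) (z : 'I_N) : PS z.+1 f = PS z f + f z.
Proof.
rewrite /PS (bigD1 z) //= addrC; congr (_ + _); apply: eq_bigl => x.
rewrite -val_eqE /= ltnS ltn_neqAle; by rewrite andbC.
Qed.

Lemma dim_sp G : is_sp G -> dimG G = (rankG G + rankG G)%N.
Proof. by case: G. Qed.

Lemma co_coroot_simple G (a b z : 'I_(dimG G)) : val b = (val a).+1 ->
  (~~ is_sp G || (a < rankG G)%N) -> (~~ is_sp G || (z < rankG G)%N) ->
  co (coroot a b) z = (z == a)%:R - (z == b)%:R.
Proof.
move=> ba ca cz; rewrite /coroot; case: ifP => [/andP [sp nb]|_]; last by rewrite co_sub !co_ev.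
move: ca cz; rewrite sp /= => ca cz.
have dn := dim_sp sp.
have h1 : (z == rev_ord b) = false.
  apply/negP => /eqP /(congr1 val); rewrite val_rev => E.
  have : b != rev_ord a by []. 
  rewrite -val_eqE val_rev /= ba => /eqP ne.
  simpl in *; lia.
have h2 : (z == rev_ord a) = false.
  apply/negP => /eqP /(congr1 val); rewrite val_rev => E; simpl in *; lia.
rewrite !(co_add, co_opp, co_ev) h1 h2; lra.
Qed.

Lemma le_co_of G (x y : vec G) :
  (forall k, 0 <= PS k (co (y - x))) -> PS (dimG G) (co (y - x)) = 0 ->
  (is_sp G -> forall a, co (y - x) a + co (y - x) (rev_ord a) = 0) -> le_co x y.
Proof.
move=> Pk Ptot anti.
set d := y - x; set P := fun k => PS k (co d).
pose cond (a : nat) := ~~ is_sp G || (a < rankG G)%N.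
pose st (a : nat) := if cond a then P a.+1 else 0.
exists (fun a b : 'I_(dimG G) => if (val b == (val a).+1) && cond a then P (val a).+1 else 0).
split; first by move=> a b; case: ifP => // _; exact: Pk.
set R := \sum_a _.
have key : forall z : 'I_(dimG G), cond z -> co R z = co d z.
  move=> z cz; rewrite /R co_sum.
  have E1 : forall a : 'I_(dimG G),
     co (\sum_(b : 'I_(dimG G) | (a < b)%N) (if (val b == (val a).+1) && cond a then P (val a).+1 else 0) *: coroot a b) z
     = \sum_(b : 'I_(dimG G)) (if nat_of_ord b == (val a).+1 then
          st a * ((val z == val a)%:R - (val z == nat_of_ord b)%:R) else 0).
    move=> a; rewrite co_sum big_mkcond; apply: eq_bigr => b _ /=.
    case: eqP => [ba|nba].
      have ab : (a < b)%N by rewrite ba.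
      rewrite ab co_scale /st /=; case: ifP => ca; last by rewrite !mul0r.
      by rewrite co_coroot_simple // !val_eqE.
    by case: ifP => _ //; rewrite co_scale mul0r.
  under eq_bigr do rewrite E1.
  under eq_bigr => a _ do rewrite (sum_ord_nat (dimG G) (val a).+1
      (fun bv => st a * ((val z == val a)%:R - (val z == bv)%:R))).
  have E2 : forall a : 'I_(dimG G),
     (if ((nat_of_ord a).+1 < dimG G)%N then st a * ((nat_of_ord z == nat_of_ord a)%:R - (nat_of_ord z == (nat_of_ord a).+1)%:R) else 0)
     = (if nat_of_ord a == nat_of_ord z then (if ((nat_of_ord z).+1 < dimG G)%N then st (nat_of_ord z) else 0) else 0)
       - (if nat_of_ord a == (nat_of_ord z).-1 then (if (0 < nat_of_ord z)%N then st (nat_of_ord z).-1 else 0) else 0).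
    move=> a; case: (ltngtP (nat_of_ord a) (nat_of_ord z)) => az.
    - case: eqP => E.
        have z0 : (0 < nat_of_ord z)%N by lia.
        have e : nat_of_ord z = (nat_of_ord a).+1 by lia.
        rewrite z0 e eqxx /= -e ltn_ord.
        lra.
      have -> : (nat_of_ord a == (nat_of_ord z).-1) = false by apply/eqP; lia.
      by case: ifP => _; rewrite ?subrr ?mulr0 ?sub0r ?oppr0.
    - have -> : (nat_of_ord a == (nat_of_ord z).-1) = false by apply/eqP; lia.
      have -> : (nat_of_ord z == (nat_of_ord a).+1) = false by apply/eqP; lia.
      by case: ifP => _; rewrite ?subr0 ?mulr0 ?subrr.
    - have -> : a = z by apply: val_inj.
      have -> : (nat_of_ord z == (nat_of_ord z).+1) = false by apply/eqP; lia.
      have -> : (if nat_of_ord z == (nat_of_ord z).-1 then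
                  (if (0 < nat_of_ord z)%N then st (nat_of_ord z).-1 else 0) else 0) = 0.
        case: (posnP (nat_of_ord z)) => z0; first by rewrite z0.
        by have -> : (nat_of_ord z == (nat_of_ord z).-1) = false by apply/eqP; lia.
      by rewrite subr0 mulr1 subr0.
  under eq_bigr do rewrite E2.
  rewrite sumrB (sum_ord_nat _ (nat_of_ord z) (fun _ => _)) (sum_ord_nat _ (nat_of_ord z).-1 (fun _ => _)).
  rewrite ltn_ord.
  have -> : ((nat_of_ord z).-1 < dimG G)%N by have := ltn_ord z; lia.
  have -> : (if ((nat_of_ord z).+1 < dimG G)%N then st z else 0) = P (nat_of_ord z).+1.
    rewrite /st cz; case: ltnP => // zN.
    have -> : (nat_of_ord z).+1 = dimG G by have := ltn_ord z; lia.
    by rewrite /P Ptot.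
  have -> : (if (0 < nat_of_ord z)%N then st (nat_of_ord z).-1 else 0) = P (nat_of_ord z).
    case: (posnP (nat_of_ord z)) => z0.
      by rewrite z0 /P PS_0.
    rewrite /st.
    have -> : cond (nat_of_ord z).-1 by move: cz; rewrite /cond; case: (is_sp G) => //=; lia.
    by rewrite prednK.
  by rewrite /P PS_succ addrC addKr.
apply/rowP => z; rewrite -/(co d z) -/(co R z).
case: (boolP (cond z)) => cz; first by rewrite key.
move: cz; rewrite /cond negb_or negbK -leqNgt => /andP [sp zn].
have dn := dim_sp sp.
have cz' : cond (rev_ord z) by rewrite /cond val_rev sp /=; have := ltn_ord z; lia.
have aR : co R z + co R (rev_ord z) = 0.
  rewrite -lf_antiw /R lf_sum big1 // => a _; rewrite lf_sum big1 // => b _.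
  by rewrite lf_scale antiw_coroot // mulr0.
have := anti sp z; rewrite -/d => ad.
rewrite (key (rev_ord z) cz') in aR.
apply/eqP; rewrite -subr_eq0; apply/eqP.
have : co d z - co R z = (co d z + co d (rev_ord z)) - (co R z + co d (rev_ord z)) by lra.
by rewrite ad aR subrr.
Qed.

Lemma PS_sub G k (u v : vec G) : PS k (co (u - v)) = PS k (co u) - PS k (co v).
Proof. by rewrite -!lf_psw lf_sub. Qed.

Lemma PS_ext N k (f g : 'I_N -> rat) : (forall x, f x = g x) -> PS k f = PS k g.
Proof. by move=> H; apply: eq_bigr => x _. Qed.

Theorem proposition4p8 (G : grp) (s : seq nat) (j : nat) (nu : vec G) :
  std_levi G s j ->
  in_XMQ s j nu -> dominant nu ->
  (* kappa_M (x) Q (nu) lies in pi_1(M) *)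
  (exists lam : vec G, in_X lam /\ in_corootQ_M s j (nu - lam)) ->
  forall nut : vec G,
    in_X nut -> M_dominant s j nut -> M_minuscule s j nut ->
    (* kappa_M(nut) = kappa_M(nu) *)
    (exists lam : vec G, in_X lam /\ in_corootQ_M s j (nu - lam) /\
                         in_corootZ_M s j (nut - lam)) ->
  forall nutd : vec G,
    dominant nutd -> (exists w : 'S_(dimG G), weyl w /\ nutd = wact w nut) ->
  forall mu : vec G, in_X mu -> dominant mu -> le_co nu mu ->
    le_co nu nutd /\ le_co nutd mu.
Proof.
move=> sl [nuQ nuc] dnu _ nut [nutQ nutI] Mdom Mmin [lam [_ [Qnu Znut]]] nutd dnutd
  [w [ww Hn]] mu [muQ muI] dmu lenm; subst nutd.
set sg := (w^-1)%g.
have cw : forall x, co (wact w nut) x = co nut (sg x) by move=> x; rewrite /co /wact mxE.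
have bs : forall i, \sum_(x | blk s j x == i) co nut x = \sum_(x | blk s j x == i) co nu x.
  move=> i; rewrite -!lf_blw.
  have h1 := lf_corootZ (fun a b sab _ => blw_coroot i sl sab) Znut.
  have h2 := lf_corootQ (fun a b sab _ => blw_coroot i sl sab) Qnu.
  move: h1 h2; rewrite !lf_sub => /eqP; rewrite subr_eq0 => /eqP ->.
  by move=> /eqP; rewrite subr_eq0 => /eqP ->.
have le : forall k, PS k (co nu) <= PS k (co mu).
  move=> k; rewrite -subr_ge0 -PS_sub -lf_psw; apply: lf_le_co lenm => a b ab.
  exact: psw_coroot.
have tot : \sum_x co mu x = \sum_x co nu x.
  rewrite -!(@PS_big _ (dimG G)) //; apply/eqP; rewrite -subr_eq0 -PS_sub -lf_psw; apply/eqP.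
  apply: lf_eq_co lenm => a b _; exact: psw_coroot_tot.
have dnutd' : domf (fun x => co nut (sg x)).
  by move=> a b ab; have := dnutd a b ab; rewrite !cw.
have C := core (blk_lt s j) dnu dnutd' dmu
  (fun a b e => nuc a b (introT eqP e))
  (fun a b e ab => Mdom a b ab (introT eqP e))
  _ nutI muI bs le tot.
have T := core_total (blk_lt s j) sg bs.
have mm : forall a b, blk s j a = blk s j b -> co nut a - co nut b <= 1.
  move=> a b e; case: (eqVneq a b) => [->|ab]; first by rewrite subrr ler01.
  by case/orP: (Mmin a b (introT eqP e) ab) => [/orP [] | ] /eqP ->; rewrite ?ler01 ?lexx // lerN10.
have {}C := C mm.
have anti : is_sp G -> forall a,
   (co (wact w nut - nu) a + co (wact w nut - nu) (rev_ord a) = 0) /\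
   (co (mu - wact w nut) a + co (mu - wact w nut) (rev_ord a) = 0).
  move=> sp a.
  have amn : co (mu - nu) a + co (mu - nu) (rev_ord a) = 0.
    rewrite -lf_antiw; apply: lf_eq_co lenm => c b _; exact: antiw_coroot.
  have ann : co (nut - nu) a + co (nut - nu) (rev_ord a) = 0.
    have h1 := lf_corootZ (fun c b _ _ => antiw_coroot a c b sp) Znut.
    have h2 := lf_corootQ (fun c b _ _ => antiw_coroot a c b sp) Qnu.
    rewrite -lf_antiw.
    have -> : nut - nu = (nut - lam) - (nu - lam) by rewrite opprB addrA subrK.
    by rewrite lf_sub h1 h2 subrr.
  have sw : sg (rev_ord a) = rev_ord (sg a).
    move: ww; rewrite /weyl sp => /(_ (sg a)); rewrite /sg permKV => E.
    by rewrite -E permK.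
  move: nutQ; rewrite /in_XQ sp => [[c Hc]].
  have ad : co (wact w nut) a + co (wact w nut) (rev_ord a) = co nut a + co nut (rev_ord a).
    by rewrite !cw sw !Hc.
  move: amn ann ad; rewrite !co_sub => amn ann ad; split; lra.
split.
- apply: le_co_of.
  + move=> k; rewrite PS_sub subr_ge0 (PS_ext k cw); exact: (proj1 (C k)).
  + rewrite PS_sub (PS_ext _ cw) !PS_big // T subrr //.
  + by move=> sp a; case: (anti sp a).
- apply: le_co_of.
  + move=> k; rewrite PS_sub subr_ge0 (PS_ext k cw); exact: (proj2 (C k)).
  + rewrite PS_sub (PS_ext _ cw) !PS_big // T tot subrr //.
  + by move=> sp a; case: (anti sp a).
Qed.
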